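(* Let $A,B,H,K$ be events with $H\ne\emptyset$, $K\ne\emptyset$. For each coherent prevision assessment $(x,y,w)$ on $\{A|H,B|K,(A|H)\vee(B|K)\}$ there exists $\lambda\in[0,+\infty]$ such that, as random quantities, $(A|H)\vee(B|K)=S_\lambda(A|H,B|K)$.
   Context: Events are identified with their indicators; $\bar E$ is the negation of $E$. For $H\ne\emptyset$ the conditional event $E|H$ is true if $EH$ is true, false if $\bar EH$ is true, void if $\bar H$ is true; with $P(E|H)=x$ it is identified with the random quantity $EH+x\bar H$, and a conditional random quantity $X|H$ with prevision $\mu$ with $XH+\mu\bar H$. Coherence (de Finetti): an assessment $(\mu_1,\dots,\mu_m)$ on $\{X_1|H_1,\dots,X_m|H_m\}$ is coherent iff for all real stakes $s_i$ the gain $G=\sum_is_iH_i(X_i-\mu_i)$, restricted to $H_1\vee\dots\vee H_m$, satisfies $\min G\le0\le\max G$. Disjunction of two conditional events: given $P(A|H)=x$, $P(B|K)=y$ and $w=\mathbb P[((AH\vee BK)+x\bar H\bar BK+y\bar K\bar AH)|(H\vee K)]$, the disjunction $(A|H)\vee(B|K)$ equals $1$ if $AH\vee BK$ is true, $0$ if $\bar AH\bar BK$ is true, $x$ if $\bar H\bar BK$ is true, $y$ if $\bar AH\bar K$ is true, $w$ if $\bar H\bar K$ is true; its prevision is $w$. Frank t-norms $T_\lambda$, $\lambda\in[0,+\infty]$: $T_0(x,y)=\min\{x,y\}$, $T_1(x,y)=xy$, $T_{+\infty}(x,y)=\max\{x+y-1,0\}$, $T_\lambda(x,y)=\log_\lambda\big(1+\frac{(\lambda^x-1)(\lambda^y-1)}{\lambda-1}\big)$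 otherwise. Frank t-conorms: $S_\lambda(x,y)=1-T_\lambda(1-x,1-y)$. $S_\lambda(A|H,B|K)$ is obtained by applying $S_\lambda$ pointwise to the values of $A|H$ and $B|K$. *)

(* Defs.v *)
From Stdlib Require Import Reals Lra Bool.
Open Scope R_scope.

(* Events are modelled as boolean predicates on a type of possible worlds
   (constituents) [Omega]; random quantities are real functions on [Omega]. *)

Definition ind (b : bool) : R := if b then 1 else 0.

(* The conditional event E|H with P(E|H)=x, as the random quantity EH + x(not H). *)
Definition cond_event {Omega : Type} (E H : Omega -> bool) (x : R) (o : Omega) : R :=
  ind (E o && H o) + x * ind (negb (H o)).

(* The random quantity  (AH \/ BK) + x ~H ~B K + y ~K ~A H  (the numerator of w). *)
Definition disj_num {Omega : Type} (A H B K : Omega -> bool) (x y : R) (o : Omega) : R :=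
  ind (orb (A o && H o) (B o && K o))
  + x * ind (negb (H o) && negb (B o) && K o)
  + y * ind (negb (K o) && negb (A o) && H o).

(* The disjunction (A|H) \/ (B|K), with prevision w, as the random quantity
   X (H \/ K) + w ~H ~K, where X = disj_num; i.e. it is 1 on AH\/BK, 0 on ~AH~BK,
   x on ~H~BK, y on ~AH~K, w on ~H~K. *)
Definition disj_event {Omega : Type} (A H B K : Omega -> bool) (x y w : R) (o : Omega) : R :=
  disj_num A H B K x y o * ind (orb (H o) (K o)) + w * ind (negb (H o) && negb (K o)).

(* de Finetti coherence of the prevision assessment (x,y,w) on
   {A|H, B|K, (A|H) \/ (B|K)}, the last being the conditional random quantity
   disj_num | (H \/ K) with prevision w: for every choice of real stakes the
   gain restricted to H \/ K satisfies min G <= 0 <= max G. *)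
Definition gain {Omega : Type} (A H B K : Omega -> bool) (x y w s1 s2 s3 : R)
  (o : Omega) : R :=
  s1 * ind (H o) * (ind (A o) - x)
  + s2 * ind (K o) * (ind (B o) - y)
  + s3 * ind (orb (H o) (K o)) * (disj_num A H B K x y o - w).

Definition coherent_disj {Omega : Type} (A H B K : Omega -> bool) (x y w : R) : Prop :=
  forall s1 s2 s3 : R,
    (exists o, (orb (H o) (K o)) = true /\ gain A H B K x y w s1 s2 s3 o <= 0) /\
    (exists o, (orb (H o) (K o)) = true /\ 0 <= gain A H B K x y w s1 s2 s3 o).

Inductive frank_param : Type :=
| LFin : R -> frank_param
| LInf : frank_param.

Definition frank_param_ok (l : frank_param) : Prop :=
  match l with LFin r => 0 <= r | LInf => True end.

Definition frank_tnorm (l : frank_param) (a b : R) : R :=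
  match l with
  | LInf => Rmax (a + b - 1) 0
  | LFin r =>
      if Req_EM_T r 0 then Rmin a b
      else if Req_EM_T r 1 then a * b
      else ln (1 + (Rpower r a - 1) * (Rpower r b - 1) / (r - 1)) / ln r
  end.

Definition frank_tconorm (l : frank_param) (a b : R) : R :=
  1 - frank_tnorm l (1 - a) (1 - b).

(* Main.v *)
Require Import Defs.
From Stdlib Require Import Reals Lra.
From Stdlib Require Ranalysis5.
Open Scope R_scope.

Definition phi (u : R) : R := if Req_EM_T u 0 then 1 else (exp u - 1) / u.
Definition psi (u : R) : R := if Req_EM_T u 0 then 1 else ln (1 + u) / u.

Lemma cont_loc : forall f g x r, 0 < r -> (forall y, Rabs (y - x) < r -> f y = g y) ->
  continuity_pt g x -> continuity_pt f x.
Proof.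
  intros f g x r Hr Heq Hg eps Heps.
  destruct (Hg eps Heps) as [alp [Ha Hb]].
  exists (Rmin alp r); split.
  - apply Rmin_pos; lra.
  - intros y [Hy1 Hy2]. simpl in *. unfold R_dist in *.
    rewrite (Heq y), (Heq x).
    + apply Hb. split; [exact Hy1|]. simpl. unfold R_dist.
      eapply Rlt_le_trans; [exact Hy2| apply Rmin_l].
    + rewrite Rminus_diag, Rabs_R0; lra.
    + eapply Rlt_le_trans; [exact Hy2| apply Rmin_r].
Qed.

Lemma cont_exp : forall x, continuity_pt exp x.
Proof. intro x. apply derivable_continuous_pt. apply derivable_pt_exp. Qed.

Lemma cont_ln : forall x, 0 < x -> continuity_pt ln x.
Proof. intros x Hx. apply derivable_continuous_pt.
  exists (/ x). apply derivable_pt_lim_ln; exact Hx. Qed.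

Lemma cont_id : forall x, continuity_pt (fun v => v) x.
Proof. intro x. apply derivable_continuous_pt. apply derivable_pt_id. Qed.

Lemma phi_cont : forall u, continuity_pt phi u.
Proof.
  intro u. destruct (Req_EM_T u 0) as [->|Hu].
  - intros eps Heps. destruct (derivable_pt_lim_exp_0 eps Heps) as [d Hd].
    exists d; split; [apply cond_pos|].
    intros y [_ Hy]. simpl in *. unfold R_dist in *. rewrite Rminus_0_r in Hy.
    unfold phi. destruct (Req_EM_T 0 0); [|congruence].
    destruct (Req_EM_T y 0) as [->|Hy0].
    + rewrite Rminus_diag, Rabs_R0; lra.
    + specialize (Hd y Hy0 Hy). rewrite Rplus_0_l, exp_0 in Hd. exact Hd.
  - apply cont_loc with (g := fun v => (exp v - 1) / v) (r := Rabs u).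
    + apply Rabs_pos_lt; exact Hu.
    + intros y Hy. unfold phi. destruct (Req_EM_T y 0) as [->|]; [|reflexivity].
      exfalso. rewrite Rminus_0_l, Rabs_Ropp in Hy. lra.
    + apply continuity_pt_div.
      * apply continuity_pt_minus; [apply cont_exp| apply continuity_pt_const; intros a b; reflexivity].
      * apply cont_id.
      * exact Hu.
Qed.

Lemma psi_cont : forall u, -1 < u -> continuity_pt psi u.
Proof.
  intros u Hu1. destruct (Req_EM_T u 0) as [->|Hu].
  - intros eps Heps. destruct (derivable_pt_lim_ln 1 Rlt_0_1 eps Heps) as [d Hd].
    exists d; split; [apply cond_pos|].
    intros y [_ Hy]. simpl in *. unfold R_dist in *. rewrite Rminus_0_r in Hy.
    unfold psi. destruct (Req_EM_T 0 0); [|congruence].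
    destruct (Req_EM_T y 0) as [->|Hy0].
    + rewrite Rminus_diag, Rabs_R0; lra.
    + specialize (Hd y Hy0 Hy). rewrite ln_1, Rinv_1, Rminus_0_r in Hd. exact Hd.
  - apply cont_loc with (g := fun v => ln (1 + v) / v) (r := Rmin (Rabs u) (1 + u)).
    + apply Rmin_pos; [apply Rabs_pos_lt; exact Hu| lra].
    + intros y Hy. unfold psi. destruct (Req_EM_T y 0) as [->|]; [|reflexivity].
      exfalso. rewrite Rminus_0_l, Rabs_Ropp in Hy. pose proof (Rmin_l (Rabs u) (1+u)). lra.
    + apply continuity_pt_div.
      * apply (continuity_pt_comp (fun v => 1 + v) ln).
        -- apply continuity_pt_plus; [apply continuity_pt_const; intros a b; reflexivity| apply cont_id].
        -- apply cont_ln. lra.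
      * apply cont_id.
      * exact Hu.
Qed.

Lemma exp_le : forall x y, x <= y -> exp x <= exp y.
Proof. intros x y [H|H]; [left; apply exp_increasing; exact H| right; rewrite H; reflexivity]. Qed.

Lemma div_nonneg : forall p d, 0 <= p -> 0 < d -> 0 <= p / d.
Proof. intros p d Hp Hd. unfold Rdiv. apply Rmult_le_pos; [exact Hp| left; apply Rinv_0_lt_compat; exact Hd]. Qed.

Lemma phi_pos : forall u, 0 < phi u.
Proof.
  intro u. unfold phi. destruct (Req_EM_T u 0) as [_|Hu]; [lra|].
  destruct (Rlt_or_le 0 u) as [Hp|Hn].
  - pose proof (exp_ineq1 u Hu). apply Rdiv_lt_0_compat; lra.
  - assert (u < 0) by lra. assert (exp u < 1) by (rewrite <- exp_0; apply exp_increasing; lra).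
    replace ((exp u - 1) / u) with ((1 - exp u) / (- u)) by (field; lra).
    apply Rdiv_lt_0_compat; lra.
Qed.

Definition mm (a b s : R) : R := a * b * phi (a * s) * phi (b * s) / phi s.
Definition GG (a b s : R) : R := mm a b s * psi (s * mm a b s).
Definition QQ (a b s : R) : R := 1 + (exp (a * s) - 1) * (exp (b * s) - 1) / (exp s - 1).

Lemma sm_eq : forall a b s, a <> 0 -> b <> 0 -> s <> 0 ->
  s * mm a b s = (exp (a * s) - 1) * (exp (b * s) - 1) / (exp s - 1).
Proof.
  intros a b s Ha Hb Hs. unfold mm, phi.
  destruct (Req_EM_T (a*s) 0) as [E|_]; [exfalso; apply Rmult_integral in E; tauto|].
  destruct (Req_EM_T (b*s) 0) as [E|_]; [exfalso; apply Rmult_integral in E; tauto|].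
  destruct (Req_EM_T s 0) as [E|_]; [tauto|].
  assert (exp s - 1 <> 0).
  { intro E. assert (exp s = exp 0) by (rewrite exp_0; lra). apply exp_inv in H. tauto. }
  field. repeat split; auto.
Qed.

Lemma QQ_pos : forall a b s, 0 <= a <= 1 -> 0 <= b <= 1 -> s <> 0 -> 0 < QQ a b s.
Proof.
  intros a b s Ha Hb Hs. unfold QQ.
  destruct (Rlt_or_le 0 s) as [Hp|Hn].
  - assert (1 <= exp (a*s)) by (rewrite <- exp_0; apply exp_le; nra).
    assert (1 <= exp (b*s)) by (rewrite <- exp_0; apply exp_le; nra).
    assert (1 < exp s) by (rewrite <- exp_0; apply exp_increasing; lra).
    assert (0 <= (exp (a * s) - 1) * (exp (b * s) - 1) / (exp s - 1)).
    { apply div_nonneg; nra. }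
    lra.
  - assert (s < 0) by lra.
    assert (exp (a*s) <= 1) by (rewrite <- exp_0; apply exp_le; nra).
    assert (exp s <= exp (a*s)) by (apply exp_le; nra).
    assert (exp (b*s) <= 1) by (rewrite <- exp_0; apply exp_le; nra).
    pose proof (exp_pos (b*s)). pose proof (exp_pos s).
    assert (exp s < 1) by (rewrite <- exp_0; apply exp_increasing; lra).
    set (ta := exp (a*s)) in *. set (tb := exp (b*s)) in *. set (t := exp s) in *.
    replace (1 + (ta - 1) * (tb - 1) / (t - 1)) with (((1 - t) - (1 - ta)*(1-tb)) / (1 - t)) by (field; lra).
    apply Rdiv_lt_0_compat; nra.
Qed.

Lemma GG_0 : forall a b, GG a b 0 = a * b.
Proof.
  intros a b. unfold GG, mm, psi, phi. rewrite !Rmult_0_r, Rmult_0_l.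
  destruct (Req_EM_T 0 0); [|congruence]. field.
Qed.

Lemma GG_eq : forall a b s, 0 < a <= 1 -> 0 < b <= 1 -> s <> 0 ->
  GG a b s = ln (QQ a b s) / s.
Proof.
  intros a b s Ha Hb Hs. unfold GG, QQ, psi.
  rewrite <- sm_eq by lra.
  assert (0 < mm a b s).
  { unfold mm. pose proof (phi_pos (a*s)); pose proof (phi_pos (b*s)); pose proof (phi_pos s).
    apply Rdiv_lt_0_compat; [|lra]. apply Rmult_lt_0_compat; [|lra]. apply Rmult_lt_0_compat; [|lra]. nra. }
  destruct (Req_EM_T (s * mm a b s) 0) as [E|_].
  - exfalso. apply Rmult_integral in E. destruct E; lra.
  - field. lra.
Qed.

Lemma GG_cont : forall a b s, 0 < a <= 1 -> 0 < b <= 1 -> continuity_pt (GG a b) s.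
Proof.
  intros a b s Ha Hb.
  assert (Hm : forall s, continuity_pt (mm a b) s).
  { intro s0. unfold mm. apply continuity_pt_div.
    - apply continuity_pt_mult; [apply continuity_pt_mult|].
      + apply continuity_pt_const; intros u v; reflexivity.
      + apply (continuity_pt_comp (fun s => a * s) phi).
        * apply continuity_pt_mult; [apply continuity_pt_const; intros u v; reflexivity| apply cont_id].
        * apply phi_cont.
      + apply (continuity_pt_comp (fun s => b * s) phi).
        * apply continuity_pt_mult; [apply continuity_pt_const; intros u v; reflexivity| apply cont_id].
        * apply phi_cont.
    - apply phi_cont.
    - pose proof (phi_pos s0); lra. }
  unfold GG. apply continuity_pt_mult; [apply Hm|].
  apply (continuity_pt_comp (fun s => s * mm a b s) psi).
  - apply continuity_pt_mult; [apply cont_id| apply Hm].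
  - apply psi_cont. destruct (Req_EM_T s 0) as [->|Hs].
    + rewrite Rmult_0_l; lra.
    + rewrite sm_eq by lra. pose proof (QQ_pos a b s). unfold QQ in H. lra.
Qed.

Lemma ln4_pos : 0 < ln 4.
Proof. rewrite <- ln_1. apply ln_increasing; lra. Qed.

Lemma ln_le : forall x y, 0 < x -> x <= y -> ln x <= ln y.
Proof. intros x y Hx [H|H]; [left; apply ln_increasing; auto| right; rewrite H; reflexivity]. Qed.

Lemma exp_mln4 : exp (- ln 4) = / 4.
Proof. rewrite exp_Ropp, exp_ln; lra. Qed.

Lemma GG_low : forall a b c, 0 < a <= 1 -> 0 < b <= 1 -> 0 <= c < Rmin a b ->
  exists s0, s0 < 0 /\ c <= GG a b s0.
Proof.
  intros a b c Ha Hb Hc.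
  set (mn := Rmin a b) in *.
  assert (Hmn1 : mn <= a) by apply Rmin_l. assert (Hmn2 : mn <= b) by apply Rmin_r.
  pose proof ln4_pos.
  set (k := ln 4 / (mn - c)).
  assert (Hk : 0 < k) by (apply Rdiv_pos_pos; lra).
  assert (Hk2 : (mn - c) * k = ln 4) by (unfold k; field; lra).
  assert (Hk3 : ln 4 <= k) by nra.
  exists (- k). split; [lra|].
  rewrite GG_eq by lra.
  assert (HQ : 0 < QQ a b (-k)) by (apply QQ_pos; lra).
  assert (HQle : QQ a b (-k) <= exp (c * - k)).
  { unfold QQ.
    assert (E1 : exp (mn * - k) = exp (c * -k) * / 4).
    { rewrite <- exp_mln4, <- exp_plus. f_equal. nra. }
    assert (exp (a * -k) <= exp (mn * -k)) by (apply exp_le; nra).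
    assert (exp (b * -k) <= exp (mn * -k)) by (apply exp_le; nra).
    assert (exp (-k) <= / 4) by (rewrite <- exp_mln4; apply exp_le; lra).
    pose proof (exp_pos (a * -k)). pose proof (exp_pos (b * -k)). pose proof (exp_pos (-k)).
    pose proof (exp_pos (c * -k)).
    set (ta := exp (a * -k)) in *. set (tb := exp (b * -k)) in *. set (t := exp (-k)) in *.
    set (tc := exp (c * -k)) in *. set (tm := exp (mn * -k)) in *.
    set (z := (ta - 1) * (tb - 1) / (t - 1)).
    assert (Hz : z * (t - 1) = (ta - 1) * (tb - 1)) by (unfold z; field; lra).
    nra. }
  assert (Hl : ln (QQ a b (-k)) <= c * - k).
  { rewrite <- (ln_exp (c * -k)). apply ln_le; auto. }
  set (z := ln (QQ a b (- k)) / - k).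
  assert (Hz : z * - k = ln (QQ a b (-k))) by (unfold z; field; lra).
  nra.
Qed.

Lemma GG_high : forall a b c, 0 < a <= 1 -> 0 < b <= 1 -> Rmax (a + b - 1) 0 < c <= 1 ->
  exists s1, 0 < s1 /\ GG a b s1 <= c.
Proof.
  intros a b c Ha Hb Hc.
  assert (HL1 : a + b - 1 <= Rmax (a + b - 1) 0) by apply Rmax_l.
  assert (HL2 : 0 <= Rmax (a + b - 1) 0) by apply Rmax_r.
  set (d := Rmin c (c - (a + b - 1))).
  assert (Hd1 : d <= c) by apply Rmin_l. assert (Hd2 : d <= c - (a + b - 1)) by apply Rmin_r.
  assert (Hd : 0 < d) by (unfold d; apply Rmin_pos; lra).
  pose proof ln4_pos.
  set (k := ln 4 / d).
  assert (Hk : 0 < k) by (apply Rdiv_pos_pos; lra).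
  assert (Hk2 : d * k = ln 4) by (unfold k; field; lra).
  assert (Hk3 : ln 4 <= k) by nra.
  exists k. split; [lra|].
  rewrite GG_eq by lra.
  assert (HQ : 0 < QQ a b k) by (apply QQ_pos; lra).
  assert (HQle : QQ a b k <= exp (c * k)).
  { unfold QQ.
    assert (E4 : exp (ln 4) = 4) by (apply exp_ln; lra).
    assert (4 <= exp (c * k)) by (rewrite <- E4; apply exp_le; nra).
    assert (4 <= exp k) by (rewrite <- E4; apply exp_le; nra).
    assert (E2 : exp (a * k) * exp (b * k) * 4 <= exp (c * k) * exp k).
    { rewrite <- E4, <- !exp_plus. apply exp_le. nra. }
    assert (1 <= exp (a*k)) by (rewrite <- exp_0; apply exp_le; nra).
    assert (1 <= exp (b*k)) by (rewrite <- exp_0; apply exp_le; nra).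
    set (ta := exp (a * k)) in *. set (tb := exp (b * k)) in *. set (t := exp k) in *.
    set (tc := exp (c * k)) in *.
    set (z := (ta - 1) * (tb - 1) / (t - 1)).
    assert (Hz : z * (t - 1) = (ta - 1) * (tb - 1)) by (unfold z; field; lra).
    nra. }
  assert (Hl : ln (QQ a b k) <= c * k).
  { rewrite <- (ln_exp (c * k)). apply ln_le; auto. }
  set (z := ln (QQ a b k) / k).
  assert (Hz : z * k = ln (QQ a b k)) by (unfold z; field; lra).
  nra.
Qed.

Definition good (l : frank_param) : Prop :=
  l = LInf \/ l = LFin 0 \/ l = LFin 1 \/ exists r, l = LFin r /\ 0 < r /\ r <> 1.

Lemma good_ok : forall l, good l -> frank_param_ok l.
Proof.
  intros l [->|[->|[->|[r [-> [Hr _]]]]]]; simpl; auto; lra.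
Qed.

Lemma frank_GG : forall a b s, 0 < a <= 1 -> 0 < b <= 1 -> s <> 0 ->
  frank_tnorm (LFin (exp s)) a b = GG a b s.
Proof.
  intros a b s Ha Hb Hs. rewrite GG_eq by auto. simpl.
  pose proof (exp_pos s).
  destruct (Req_EM_T (exp s) 0) as [E|_]; [lra|].
  destruct (Req_EM_T (exp s) 1) as [E|_].
  { exfalso. rewrite <- exp_0 in E. apply exp_inv in E. tauto. }
  unfold QQ, Rpower. rewrite ln_exp. rewrite (Rmult_comm a s), (Rmult_comm b s). reflexivity.
Qed.

Lemma exists_frank : forall a b c, 0 <= a <= 1 -> 0 <= b <= 1 ->
  Rmax (a + b - 1) 0 <= c <= Rmin a b ->
  exists l, good l /\ frank_tnorm l a b = c.
Proof.
  intros a b c Ha Hb Hc.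
  assert (HL1 : a + b - 1 <= Rmax (a + b - 1) 0) by apply Rmax_l.
  assert (HL2 : 0 <= Rmax (a + b - 1) 0) by apply Rmax_r.
  assert (Hm1 : Rmin a b <= a) by apply Rmin_l. assert (Hm2 : Rmin a b <= b) by apply Rmin_r.
  destruct (Rtotal_order c (a * b)) as [Hlt|[Heq|Hgt]].
  -
    destruct (Req_EM_T c (Rmax (a + b - 1) 0)) as [E|Hne].
    + exists LInf. split; [left; reflexivity|]. simpl. rewrite E. reflexivity.
    + assert (Ha0 : 0 < a) by (destruct (Req_EM_T a 0); [subst; nra| lra]).
      assert (Hb0 : 0 < b) by (destruct (Req_EM_T b 0); [subst; nra| lra]).
      destruct (GG_high a b c) as [s1 [Hs1 Hg]]; [lra|lra|split; [lra|nra]|].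
      destruct Hg as [Hg|Hg].
      * destruct (Ranalysis5.IVT_interv (fun s => c - GG a b s) 0 s1) as [z [Hz1 Hz2]].
        -- intros s _. apply continuity_pt_minus; [apply continuity_pt_const; intros u v; reflexivity|].
           apply GG_cont; lra.
        -- exact Hs1.
        -- rewrite GG_0. lra.
        -- lra.
        -- assert (z <> 0) by (intro; subst z; rewrite GG_0 in Hz2; lra).
           exists (LFin (exp z)). split.
           ++ right; right; right. exists (exp z). split; [reflexivity|]. split; [apply exp_pos|].
              intro E. rewrite <- exp_0 in E. apply exp_inv in E. tauto.
           ++ rewrite frank_GG by lra. lra.
      * exists (LFin (exp s1)). split.
        -- right; right; right. exists (exp s1). split; [reflexivity|]. split; [apply exp_pos|].
           intro E. rewrite <- exp_0 in E. apply exp_inv in E. lra.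
        -- rewrite frank_GG by lra. lra.
  - exists (LFin 1). split; [right; right; left; reflexivity|]. simpl.
    destruct (Req_EM_T 1 0); [lra|]. destruct (Req_EM_T 1 1); [lra|congruence].
  - destruct (Req_EM_T c (Rmin a b)) as [E|Hne].
    + exists (LFin 0). split; [right; left; reflexivity|]. simpl.
      destruct (Req_EM_T 0 0); [rewrite E; reflexivity|congruence].
    + assert (Ha0 : 0 < a) by (destruct (Req_EM_T a 0); [subst; nra| lra]).
      assert (Hb0 : 0 < b) by (destruct (Req_EM_T b 0); [subst; nra| lra]).
      destruct (GG_low a b c) as [s0 [Hs0 Hg]]; [lra|lra|split; [nra|lra]|].
      destruct Hg as [Hg|Hg].
      * destruct (Ranalysis5.IVT_interv (fun s => c - GG a b s) s0 0) as [z [Hz1 Hz2]].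
        -- intros s _. apply continuity_pt_minus; [apply continuity_pt_const; intros u v; reflexivity|].
           apply GG_cont; lra.
        -- exact Hs0.
        -- lra.
        -- rewrite GG_0. lra.
        -- assert (z <> 0) by (intro; subst z; rewrite GG_0 in Hz2; lra).
           exists (LFin (exp z)). split.
           ++ right; right; right. exists (exp z). split; [reflexivity|]. split; [apply exp_pos|].
              intro E. rewrite <- exp_0 in E. apply exp_inv in E. tauto.
           ++ rewrite frank_GG by lra. lra.
      * exists (LFin (exp s0)). split.
        -- right; right; right. exists (exp s0). split; [reflexivity|]. split; [apply exp_pos|].
           intro E. rewrite <- exp_0 in E. apply exp_inv in E. lra.
        -- rewrite frank_GG by lra. lra.
Qed.

Lemma tnorm_bdry : forall l a, good l -> 0 <= a <= 1 ->
  frank_tnorm l a 1 = a /\ frank_tnorm l 1 a = a /\ frank_tnorm l a 0 = 0 /\ frank_tnorm l 0 a = 0.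
Proof.
  intros l a Hl Ha.
  destruct Hl as [->|[->|[->|[r [-> [Hr Hr1]]]]]]; simpl.
  - repeat split.
    + rewrite Rmax_left; lra.
    + rewrite Rmax_left; lra.
    + rewrite Rmax_right; lra.
    + rewrite Rmax_right; lra.
  - destruct (Req_EM_T 0 0); [|congruence]. repeat split.
    + apply Rmin_left; lra.
    + apply Rmin_right; lra.
    + apply Rmin_right; lra.
    + apply Rmin_left; lra.
  - destruct (Req_EM_T 1 0); [lra|]. destruct (Req_EM_T 1 1); [|congruence]. repeat split; ring.
  - destruct (Req_EM_T r 0); [lra|]. destruct (Req_EM_T r 1); [congruence|].
    assert (Hl : ln r <> 0) by (apply ln_neq_0; auto).
    rewrite Rpower_1 by auto. rewrite Rpower_O by auto.
    assert (r - 1 <> 0) by (intro; apply Hr1; lra).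
    repeat split.
    + replace (1 + (Rpower r a - 1) * (r - 1) / (r - 1)) with (Rpower r a) by (field; auto).
      rewrite ln_Rpower. field; auto.
    + replace (1 + (r - 1) * (Rpower r a - 1) / (r - 1)) with (Rpower r a) by (field; auto).
      rewrite ln_Rpower. field; auto.
    + replace (1 + (Rpower r a - 1) * (1 - 1) / (r - 1)) with 1 by (field; auto).
      rewrite ln_1. field; auto.
    + replace (1 + (1 - 1) * (Rpower r a - 1) / (r - 1)) with 1 by (field; auto).
      rewrite ln_1. field; auto.
Qed.

Section Coh.
Variable Omega : Type.
Variables A B H K : Omega -> bool.
Variables x y w : R.

Definition uu (o : Omega) := Defs.ind (H o) * (Defs.ind (A o) - x).
Definition vv (o : Omega) := Defs.ind (K o) * (Defs.ind (B o) - y).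
Definition DD := x + y - x * y - w.

Lemma coh_use : coherent_disj A H B K x y w -> forall al be ga,
  exists o, (orb (H o) (K o)) = true /\ al * uu o + be * vv o + ga * (DD - uu o * vv o) <= 0.
Proof.
  intros Hc al be ga.
  destruct (Hc (al - ga * (1 - y)) (be - ga * (1 - x)) ga) as [[o [Ho Hg]] _].
  exists o. split; auto.
  replace (al * uu o + be * vv o + ga * (DD - uu o * vv o))
    with (gain A H B K x y w (al - ga * (1 - y)) (be - ga * (1 - x)) ga o); auto.
  unfold gain, disj_num, uu, vv, DD.
  destruct (H o), (K o), (A o), (B o); simpl in *; try discriminate; unfold Defs.ind; ring.
Qed.

Lemma coh_use2 : coherent_disj A H B K x y w -> forall al be ga,
  exists o, (orb (H o) (K o)) = true /\ 0 <= al * uu o + be * vv o + ga * (DD - uu o * vv o).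
Proof.
  intros Hc al be ga. destruct (coh_use Hc (-al) (-be) (-ga)) as [o [Ho Hg]].
  exists o. split; auto. nra.
Qed.

Lemma key_pos : forall D0 y0 v0 u0, D0 <> 0 -> 0 <= u0 -> v0 * v0 <= 2 + 2 * y0 * y0 ->
  0 < (D0*D0 + 1 + y0*y0) * u0 + D0 * (D0 - u0 * v0).
Proof.
  intros D0 y0 v0 u0 HD Hu Hv.
  assert (0 < D0 * D0) by (apply Rsqr_pos_lt; auto).
  assert (D0 * v0 <= D0*D0 + 1 + y0*y0) by nra.
  nra.
Qed.

Lemma uu_cases : forall o, uu o = 0 \/ uu o = 1 - x \/ uu o = - x.
Proof. intro o. unfold uu. destruct (H o), (A o); simpl; unfold Defs.ind;
  first [left; ring | right; left; ring | right; right; ring]. Qed.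

Lemma vv_cases : forall o, vv o = 0 \/ vv o = 1 - y \/ vv o = - y.
Proof. intro o. unfold vv. destruct (K o), (B o); simpl; unfold Defs.ind;
  first [left; ring | right; left; ring | right; right; ring]. Qed.

Lemma coh_bounds : coherent_disj A H B K x y w -> DD <> 0 ->
  0 <= x <= 1 /\ 0 <= y <= 1 /\ x <= w /\ y <= w /\ w <= 1 /\ w <= x + y.
Proof.
  intros Hc HD.
  assert (Hx0 : 0 <= x).
  { destruct (Rle_or_lt 0 x) as [|Hx]; auto. exfalso.
    destruct (coh_use Hc (DD*DD + 1 + y*y) 0 DD) as [o [Ho Hg]].
    assert (Hu : 0 <= uu o) by (destruct (uu_cases o) as [E|[E|E]]; destruct (vv_cases o) as [F|[F|F]]; rewrite ?E, ?F; lra).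
    assert (Hv : vv o * vv o <= 2 + 2 * y * y) by (pose proof (Rle_0_sqr (1 + y)); pose proof (Rle_0_sqr (1 - y)); unfold Rsqr in *; destruct (uu_cases o) as [E|[E|E]]; destruct (vv_cases o) as [F|[F|F]]; rewrite ?E, ?F; nra).
    pose proof (key_pos DD y (vv o) (uu o) HD Hu Hv). nra. }
  assert (Hx1 : x <= 1).
  { destruct (Rle_or_lt x 1) as [|Hx]; auto. exfalso.
    destruct (coh_use Hc (-(DD*DD + 1 + y*y)) 0 DD) as [o [Ho Hg]].
    assert (Hu : 0 <= - uu o) by (destruct (uu_cases o) as [E|[E|E]]; destruct (vv_cases o) as [F|[F|F]]; rewrite ?E, ?F; lra).
    assert (Hv : - vv o * - vv o <= 2 + 2 * y * y) by (pose proof (Rle_0_sqr (1 + y)); pose proof (Rle_0_sqr (1 - y)); unfold Rsqr in *; destruct (uu_cases o) as [E|[E|E]]; destruct (vv_cases o) as [F|[F|F]]; rewrite ?E, ?F; nra).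
    pose proof (key_pos DD y (- vv o) (- uu o) HD Hu Hv). nra. }
  assert (Hy0 : 0 <= y).
  { destruct (Rle_or_lt 0 y) as [|Hy]; auto. exfalso.
    destruct (coh_use Hc 0 (DD*DD + 1 + x*x) DD) as [o [Ho Hg]].
    assert (Hu : 0 <= vv o) by (destruct (uu_cases o) as [E|[E|E]]; destruct (vv_cases o) as [F|[F|F]]; rewrite ?E, ?F; lra).
    assert (Hv : uu o * uu o <= 2 + 2 * x * x) by (pose proof (Rle_0_sqr (1 + x)); pose proof (Rle_0_sqr (1 - x)); unfold Rsqr in *; destruct (uu_cases o) as [E|[E|E]]; destruct (vv_cases o) as [F|[F|F]]; rewrite ?E, ?F; nra).
    pose proof (key_pos DD x (uu o) (vv o) HD Hu Hv). nra. }
  assert (Hy1 : y <= 1).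
  { destruct (Rle_or_lt y 1) as [|Hy]; auto. exfalso.
    destruct (coh_use Hc 0 (-(DD*DD + 1 + x*x)) DD) as [o [Ho Hg]].
    assert (Hu : 0 <= - vv o) by (destruct (uu_cases o) as [E|[E|E]]; destruct (vv_cases o) as [F|[F|F]]; rewrite ?E, ?F; lra).
    assert (Hv : - uu o * - uu o <= 2 + 2 * x * x) by (pose proof (Rle_0_sqr (1 + x)); pose proof (Rle_0_sqr (1 - x)); unfold Rsqr in *; destruct (uu_cases o) as [E|[E|E]]; destruct (vv_cases o) as [F|[F|F]]; rewrite ?E, ?F; nra).
    pose proof (key_pos DD x (- uu o) (- vv o) HD Hu Hv). nra. }
  split; [lra|]. split; [lra|].
  split. { destruct (coh_use Hc (-y) (1-x) 1) as [o [Ho Hg]]. unfold DD in Hg.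
    destruct (uu_cases o) as [E|[E|E]]; destruct (vv_cases o) as [F|[F|F]]; rewrite E, F in *; nra. }
  split. { destruct (coh_use Hc (1-y) (-x) 1) as [o [Ho Hg]]. unfold DD in Hg.
    destruct (uu_cases o) as [E|[E|E]]; destruct (vv_cases o) as [F|[F|F]]; rewrite E, F in *; nra. }
  split. { destruct (coh_use Hc (-(1-y)) (-(1-x)) (-1)) as [o [Ho Hg]]. unfold DD in Hg.
    destruct (uu_cases o) as [E|[E|E]]; destruct (vv_cases o) as [F|[F|F]]; rewrite E, F in *; nra. }
  { destruct (coh_use Hc y x (-1)) as [o [Ho Hg]]. unfold DD in Hg.
    destruct (uu_cases o) as [E|[E|E]]; destruct (vv_cases o) as [F|[F|F]]; rewrite E, F in *; nra. }
Qed.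

End Coh.

Lemma cond_val : forall (Omega : Type) (E C : Omega -> bool) z o,
  cond_event E C z o = if C o then Defs.ind (E o) else z.
Proof. intros. unfold cond_event. destruct (C o), (E o); simpl; ring. Qed.

Lemma disj_val : forall (Omega : Type) (A H B K : Omega -> bool) x y w o,
  disj_event A H B K x y w o =
  if orb (H o) (K o) then 1 - (1 - cond_event A H x o) * (1 - cond_event B K y o) else w.
Proof.
  intros. rewrite !cond_val. unfold disj_event, disj_num.
  destruct (H o), (K o), (A o), (B o); simpl; unfold Defs.ind; ring.
Qed.

Theorem theorem16 (Omega : Type) (A B H K : Omega -> bool)
  (HH : exists o, H o = true) (HK : exists o, K o = true)
  (x y w : R) (Hcoh : coherent_disj A H B K x y w) :
  exists l : frank_param, frank_param_ok l /\
    forall o : Omega,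
      disj_event A H B K x y w o
      = frank_tconorm l (cond_event A H x o) (cond_event B K y o).
Proof.
  destruct (Req_EM_T (DD x y w) 0) as [HD|HD].
  - exists (LFin 1). split; [simpl; lra|]. intro o.
    unfold frank_tconorm. simpl. destruct (Req_EM_T 1 0); [lra|]. destruct (Req_EM_T 1 1); [|congruence].
    rewrite disj_val. destruct (H o) eqn:EH, (K o) eqn:EK; simpl; try ring.
    rewrite !cond_val, EH, EK. unfold DD in HD. lra.
  - destruct (coh_bounds Omega A B H K x y w Hcoh HD) as [Hx [Hy [H1 [H2 [H3 H4]]]]].
    destruct (exists_frank (1 - x) (1 - y) (1 - w)) as [l [Hl Hlv]]; [lra|lra| |].
    { split.
      - apply Rmax_lub; lra.
      - apply Rmin_glb; lra. }
    exists l. split; [apply good_ok; auto|]. intro o.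
    unfold frank_tconorm. rewrite disj_val, !cond_val.
    pose proof (tnorm_bdry l (1 - x) Hl ltac:(lra)) as [Bx1 [Bx2 [Bx3 Bx4]]].
    pose proof (tnorm_bdry l (1 - y) Hl ltac:(lra)) as [By1 [By2 [By3 By4]]].
    pose proof (tnorm_bdry l 0 Hl ltac:(lra)) as [B01 [B02 [B03 B04]]].
    pose proof (tnorm_bdry l 1 Hl ltac:(lra)) as [B11 [B12 [B13 B14]]].
    destruct (H o), (K o), (A o), (B o); simpl; unfold Defs.ind;
      replace (1 - 1) with 0 by ring; replace (1 - 0) with 1 by ring;
      try rewrite Hlv; try rewrite Bx1; try rewrite Bx3; try rewrite By2; try rewrite By4;
      try rewrite B01; try rewrite B11; try rewrite B03; try rewrite B13; lra.
Qed.
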